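(* Let $q$ be a prime power, let $C\subseteq\mathbb{F}_q^n$ be an $[n,k]_q$ linear code, and let $t\in\mathbb{N}$. Then \[ \log_{q^t} \left(V_{q^t,n,R_t(C)}\right) \geq n-k. \]
   Context: An $[n,k]_q$ code is a $k$-dimensional subspace of $\mathbb{F}_q^n$. For a $t\times n$ matrix $\mathbf{v}$ over $\mathbb{F}_q$ with rows $\overline{v}_1,\dots,\overline{v}_t$, $\mathrm{wt}^{(t)}(\mathbf{v})=\left|\bigcup_{i} \mathrm{supp}(\overline{v}_i)\right|$ and $d^{(t)}(\mathbf{u},\mathbf{v})=\mathrm{wt}^{(t)}(\mathbf{u}-\mathbf{v})$. $C^t$ is the set of $t\times n$ matrices over $\mathbb{F}_q$ all of whose rows lie in $C$, and the $t$-th generalized covering radius $R_t(C)$ is the smallest integer $\rho$ such that for every $\mathbf{v}\in\mathbb{F}_q^{t\times n}$ some $\mathbf{c}\in C^t$ has $d^{(t)}(\mathbf{v},\mathbf{c})\le\rho$. $V_{Q,n,r}=\sum_{i=0}^r\binom{n}{i}(Q-1)^i$. *)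

(* Defs.v *)
From HB Require Import structures.
From mathcomp Require Import all_boot all_order all_algebra all_field.
From mathcomp Require Import reals exp.
Set Implicit Arguments. Unset Strict Implicit. Unset Printing Implicit Defensive.
Import Order.TTheory GRing.Theory Num.Theory.

Section Covering.
Variables (F : finFieldType) (n t : nat).

Definition gwt (v : 'M[F]_(t, n)) : nat :=
  #|[set j : 'I_n | [exists i : 'I_t, v i j != 0%R]]|.

Definition gdist (u v : 'M[F]_(t, n)) : nat := gwt (u - v)%R.

Definition in_Ct (C : {vspace 'rV[F]_n}) (c : 'M[F]_(t, n)) : bool :=
  [forall i : 'I_t, (row i c \in C)%VS].

Definition gcovers (C : {vspace 'rV[F]_n}) (rho : nat) : bool :=
  [forall v : 'M[F]_(t, n), [exists c : 'M[F]_(t, n), in_Ct C c && (gdist v c <= rho)]].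

Lemma gcovers_n (C : {vspace 'rV[F]_n}) : exists rho, gcovers C rho.
Proof.
exists n; apply/forallP => v; apply/existsP; exists 0%R.
apply/andP; split.
  by apply/forallP => i; rewrite row0 mem0v.
rewrite /gdist /gwt; apply: leq_trans (max_card _) _.
by rewrite card_ord.
Qed.

Definition gcov_radius (C : {vspace 'rV[F]_n}) : nat := ex_minn (gcovers_n C).

End Covering.

Definition Vball (Q n r : nat) : nat := \sum_(i < r.+1) 'C(n, i) * (Q - 1) ^ i.

(* Main.v *)
Require Import Defs.
From HB Require Import structures.
From mathcomp Require Import all_boot all_order all_algebra all_field.
From mathcomp Require Import reals exp.
Set Implicit Arguments. Unset Strict Implicit. Unset Printing Implicit Defensive.
Import Order.TTheory GRing.Theory Num.Theory.

Lemma count_ball (aT bT : finType) (z : bT) r :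
  #|[set f : {ffun aT -> bT} | #|[set x | f x != z]| <= r]| =
  \sum_(i < r.+1) 'C(#|aT|, i) * (#|bT| - 1) ^ i.
Proof.
set A := [set f : {ffun aT -> bT} | _].
rewrite -sum1_card.
rewrite (partition_big (fun f : {ffun aT -> bT} => [set x | f x != z])
           (fun S : {set aT} => #|S| <= r)); last by move=> f; rewrite inE.
rewrite (eq_bigr (fun S : {set aT} => (#|bT| - 1) ^ #|S|)); last first.
  move=> S Sr.
  rewrite subn1 -(cardC1 z) -(card_pffun_on z S (predC1 z)) -sum1_card.
  apply: eq_bigl => f.
  apply/andP/pffun_onP.
    case=> _ /eqP <-; split.
      by apply/subsetP => x; rewrite !inE.
    by move=> y /imageP[x]; rewrite inE => fx ->; rewrite !inE.
  case=> sub img.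
  have eS : [set x | f x != z] = S.
    apply/setP => x; rewrite inE; apply/idP/idP.
      by move=> fx; apply: (subsetP sub); rewrite inE.
    by move=> xS; have := img (f x) (image_f f xS); rewrite !inE.
  by rewrite inE eS Sr; split.
rewrite (partition_big (fun S : {set aT} => (inord #|S| : 'I_r.+1)) xpredT) //.
apply: eq_bigr => i _.
rewrite (eq_bigl (fun S : {set aT} => #|S| == i)); last first.
  move=> S; apply/andP/idP.
    by case=> Sr /eqP <-; rewrite inordK.
  move/eqP=> Si; rewrite Si -[X in _ == X]inord_val; split=> //.
  by rewrite -ltnS ltn_ord.
rewrite (eq_bigr (fun _ => (#|bT| - 1) ^ i)); last by move=> S /eqP ->.
rewrite sum_nat_const.
have -> : #|[pred S : {set aT} | #|S| == i]| = 'C(#|aT|, i).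
  by rewrite -card_draws; apply: eq_card => S; rewrite inE.
by [].
Qed.
Import Order.TTheory GRing.Theory Num.Theory.

Section S.
Variables (F : finFieldType) (n t : nat) (C : {vspace 'rV[F]_n}).

Lemma card_Ct : #|[set c : 'M[F]_(t, n) | in_Ct C c]| <= #|C| ^ t.
Proof.
pose g (c : 'M[F]_(t, n)) := [ffun i => row i c].
have ginj : injective g.
  move=> a b /ffunP eab; apply/matrixP => i j.
  by have := eab i; rewrite !ffunE => /rowP/(_ j); rewrite !mxE.
rewrite -(card_imset _ ginj) -[t in _ ^ t]card_ord -card_ffun_on.
apply: subset_leq_card; apply/subsetP => y /imsetP[c]; rewrite inE => /forallP hc ->.
by apply/ffun_onP => i; rewrite ffunE; apply: hc.
Qed.

Lemma card_ball r : #|[set e : 'M[F]_(t, n) | gwt e <= r]| <= Vball (#|F| ^ t) n r.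
Proof.
pose h (e : 'M[F]_(t, n)) := [ffun j => col j e].
have hinj : injective h.
  move=> a b /ffunP eab; apply/matrixP => i j.
  by have := eab j; rewrite !ffunE => /colP/(_ i); rewrite !mxE.
rewrite /Vball -[in X in _ <= X](card_ord n) -[t in _ ^ t]muln1 -card_mx -(count_ball 'I_n (0%R : 'cV[F]_t)).
rewrite -(card_imset _ hinj).
apply: subset_leq_card; apply/subsetP => y /imsetP[e]; rewrite inE => he ->.
rewrite inE; apply: leq_trans he; rewrite /gwt.
apply: subset_leq_card; apply/subsetP => j; rewrite !inE ffunE => hj.
move: hj; apply: contraNT; move/existsPn => hn; apply/eqP/colP => i.
by rewrite !mxE; apply/eqP; have := hn i; rewrite negbK.
Qed.

End S.

Theorem lemma7 (R : realType) (F : finFieldType) (n k t : nat)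
  (C : {vspace 'rV[F]_n}) (hk : \dim C = k) (ht : (0 < t)%N) :
  let q := #|F| in
  ((n - k)%:R <= ln ((Vball (q ^ t) n (gcov_radius t C))%:R : R)
                 / ln ((q ^ t)%:R : R))%R.
Proof.
cbv zeta; set q := #|F|.
set R0 := gcov_radius t C.
set V := Vball (q ^ t) n R0.
have cov : gcovers t C R0 by rewrite /R0 /gcov_radius; case: ex_minnP.
have q1 : 1 < q := card_finNzRing_gt1 F.
have Q1 : 1 < q ^ t by rewrite -(expn0 q) ltn_exp2l.
pose cv (v : 'M[F]_(t, n)) :=
  odflt 0%R [pick c | in_Ct C c && (gdist v c <= R0)].
have hc v : in_Ct C (cv v) && (gdist v (cv v) <= R0).
  rewrite /cv; case: pickP => [c hc //|none].
  by move/forallP: cov => /(_ v) /existsP [c hc]; rewrite none in hc.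
pose f (v : 'M[F]_(t, n)) := (cv v, (v - cv v)%R).
have finj : injective f.
  move=> a b [] e1 e2.
  by rewrite -[a](subrK (cv a)) e2 e1 subrK.
have key : q ^ (t * n) <= q ^ (k * t) * V.
  rewrite -card_mx -cardsT -(card_imset _ finj).
  rewrite (_ : q ^ (k * t) = (#|C| ^ t)); last by rewrite card_vspace hk expnM.
  apply: (@leq_trans #|setX [set c : 'M[F]_(t, n) | in_Ct C c]
                          [set e : 'M[F]_(t, n) | gwt e <= R0]|).
    apply: subset_leq_card; apply/subsetP => y /imsetP [v _ ->].
    by rewrite !inE /=; case/andP: (hc v) => -> /=.
  by rewrite cardsX leq_mul // ?card_Ct // card_ball.
have lnQ : (0 < ln ((q ^ t)%:R : R))%R by rewrite ln_gt0 // ltr1n.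
have Vpos : 0 < V.
  have : 0 < q ^ (k * t) * V by apply: leq_trans key; rewrite expn_gt0 ltnW.
  by rewrite muln_gt0 => /andP [].
case: (leqP k n) => kn; last first.
  have -> : n - k = 0 by apply/eqP; rewrite subn_eq0 ltnW.
  by apply: divr_ge0; [apply: ln_ge0; rewrite ler1n | exact: ltW lnQ].
have key2 : (q ^ t) ^ (n - k) <= V.
  rewrite -(@leq_pmul2r (q ^ (k * t))); last by rewrite expn_gt0 ltnW.
  have e : t * (n - k) + k * t = t * n by rewrite (mulnC k t) -mulnDr subnK.
  by rewrite -!expnM -expnD e [V * _]mulnC // key.
rewrite ler_pdivlMr // mulr_natl -lnXn ?ltr0n ?(ltnW Q1) // -natrX.
rewrite ler_ln ?posrE ?ltr0n ?expn_gt0 ?(ltnW q1) //.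
by rewrite ler_nat.
Qed.
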